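(* Let $n,m,d_j\in\mathbb{Z}_+$, $j=0,1,\dots,2k$, satisfy $d_0=n$, $d_{2k}=m\ge 2n+1$, and $d_j\ge 2n+1$ for all even $j\ge 2$. Let $$F_k=B_k\circ f^{(k)}_\theta\circ B_{k-1}\circ f^{(k-1)}_\theta\circ\cdots\circ B_1\circ f^{(1)}_\theta,$$ where each $f^{(j)}_\theta:\mathbb{R}^{d_{2j-2}}\to\mathbb{R}^{d_{2j-1}}$ is an injective neural network and $B_j\in\mathbb{R}^{d_{2j}\times d_{2j-1}}$ are random matrices whose joint distribution is absolutely continuous with respect to Lebesgue measure on $\prod_{j=1}^k\mathbb{R}^{d_{2j}\times d_{2j-1}}$. Then $F_k:\mathbb{R}^n\to\mathbb{R}^m$ is injective almost surely.
   Context: Neural networks here are ReLU networks $z\mapsto W_{L+1}\phi_L(W_L\cdots\phi_1(W_1z+b_1)\cdots+b_L)$ with weight matrices $W_\ell$, biases $b_\ell$ and $\phi_\ell=\operatorname{ReLU}$ applied componentwise (arbitrary depth and widths). *)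

(* Defs.v *)
From HB Require Import structures.
From mathcomp Require Import all_boot all_order all_algebra.
From mathcomp Require Import all_classical all_reals all_analysis.
Set Implicit Arguments. Unset Strict Implicit. Unset Printing Implicit Defensive.
Import Order.TTheory GRing.Theory Num.Theory.
Local Open Scope ring_scope.
Local Open Scope classical_set_scope.

Definition relu_vec (R : realType) (h : nat) (v : 'cV[R]_h) : 'cV[R]_h :=
  map_mx (fun x => Num.max x 0) v.

(* A ReLU network R^a -> R^b:  z |-> W_{L+1} phi(W_L ... phi(W_1 z + b_1) ... + b_L),
   arbitrary depth L >= 0 and widths. *)
Inductive relu_net (R : realType) : nat -> nat -> Type :=
| NetOut (a b : nat) : 'M[R]_(b, a) -> relu_net R a b
| NetLayer (a h b : nat) : 'M[R]_(h, a) -> 'cV[R]_h -> relu_net R h b -> relu_net R a b.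

Fixpoint net_eval (R : realType) (a b : nat) (N : relu_net R a b) : 'cV[R]_a -> 'cV[R]_b :=
  match N in relu_net _ a b return 'cV[R]_a -> 'cV[R]_b with
  | NetOut _ _ W => fun z => W *m z
  | NetLayer _ _ _ W bias N' => fun z => net_eval N' (relu_vec (W *m z + bias))
  end.

Definition is_relu_net (R : realType) (a b : nat) (f : 'cV[R]_a -> 'cV[R]_b) : Prop :=
  exists N : relu_net R a b, forall z, f z = net_eval N z.

Definition mxfam (R : realType) (k : nat) (rows cols : 'I_k -> nat) :=
  forall i : 'I_k, 'M[R]_(rows i, cols i).

Definition box_vol (R : realType) k (rows cols : 'I_k -> nat)
    (lo hi : mxfam R rows cols) : R :=
  \prod_(i < k) \prod_(r < rows i) \prod_(c < cols i) (hi i r c - lo i r c).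

(* Lebesgue-null subsets of the parameter space: outer Lebesgue measure zero,
   i.e. coverable by countably many boxes of arbitrarily small total volume. *)
Definition lebesgue_null (R : realType) k (rows cols : 'I_k -> nat)
    (A : set (mxfam R rows cols)) : Prop :=
  forall eps : R, 0 < eps ->
    exists lo hi : nat -> mxfam R rows cols,
      [/\ (forall n i r c, lo n i r c <= hi n i r c),
          (forall x, A x -> exists n, forall i r c,
              lo n i r c <= x i r c <= hi n i r c) &
          (forall M, \sum_(n < M) box_vol (lo n) (hi n) < eps)].

(* F_k = B_k o f^(k) o ... o B_1 o f^(1), with layer index j = i+1 for i : 'I_k;
   dims d (2j) = d (i.*2) etc. comp i _ is the partial composition of the first i blocks. *)
Fixpoint comp_blocks (R : realType) (k : nat) (d : nat -> nat)
    (f : forall i : 'I_k, 'cV[R]_(d (i.*2)) -> 'cV[R]_(d (i.*2).+1))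
    (B : forall i : 'I_k, 'M[R]_(d (i.+1).*2, d (i.*2).+1))
    (i : nat) : (i <= k)%N -> 'cV[R]_(d 0) -> 'cV[R]_(d (i.*2)) :=
  match i return (i <= k)%N -> 'cV[R]_(d 0) -> 'cV[R]_(d (i.*2)) with
  | 0 => fun _ z => z
  | i'.+1 => fun h z =>
      B (Ordinal h) *m f (Ordinal h) (comp_blocks f B (ltnW h) z)
  end.

Definition Fk (R : realType) (k : nat) (d : nat -> nat)
    (f : forall i : 'I_k, 'cV[R]_(d (i.*2)) -> 'cV[R]_(d (i.*2).+1))
    (B : forall i : 'I_k, 'M[R]_(d (i.+1).*2, d (i.*2).+1)) :
    'cV[R]_(d 0) -> 'cV[R]_(d (k.*2)) :=
  comp_blocks f B (leqnn k).

(* Main.v *)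
Require Import Defs.
From HB Require Import structures.
From mathcomp Require Import all_boot all_order all_algebra.
From mathcomp Require Import all_classical all_reals all_analysis.
From mathcomp Require Import ring lra.
Import Order.TTheory GRing.Theory Num.Theory.
Local Open Scope ring_scope.
Local Open Scope classical_set_scope.

Set Implicit Arguments. Unset Strict Implicit. Unset Printing Implicit Defensive.
Local Open Scope ring_scope.
Local Open Scope classical_set_scope.

Section CountUnion.
Variables (R : realType) (k : nat) (rows cols : 'I_k -> nat).
Local Notation X := (mxfam R rows cols).

Definition finnullM (A : set X) : Prop :=
  forall eps : R, 0 < eps -> exists (J : finType) (lo hi : J -> X),
   [/\ forall j i r c, lo j i r c <= hi j i r c,
       forall x, A x -> exists j, forall i r c, lo j i r c <= x i r c <= hi j i r c &
       \sum_(j : J) box_vol (lo j) (hi j) < eps].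

Definition zbox : X * X := (fun i => 0, fun i => 0).
Definition bvalid (b : X * X) := forall i r c, b.1 i r c <= b.2 i r c.
Definition inbox (b : X * X) (x : X) := forall i r c, b.1 i r c <= x i r c <= b.2 i r c.
Definition bvol (b : X * X) := box_vol b.1 b.2.

Lemma bvol_ge0 b : bvalid b -> 0 <= bvol b.
Proof.
move=> hb; rewrite /bvol /box_vol; apply: prodr_ge0 => i _.
apply: prodr_ge0 => r _; apply: prodr_ge0 => c _; by rewrite subr_ge0 hb.
Qed.

Lemma zbox_valid : bvalid zbox.
Proof. by move=> i r c /=. Qed.

Hypothesis hz : bvol zbox = 0.

Lemma finnullM_seq (A : set X) eps : 0 < eps -> finnullM A ->
  exists L : seq (X * X), [/\ (0 < size L)%N, forall p, bvalid (nth zbox L p),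
     forall x, A x -> exists2 p, (p < size L)%N & inbox (nth zbox L p) x &
     \sum_(b <- L) bvol b < eps].
Proof.
move=> he /(_ eps he) [J [lo [hi [hv hc hs]]]].
exists ([seq (lo j, hi j) | j <- enum J] ++ [:: zbox]); split.
- by rewrite size_cat addn1.
- move=> p; rewrite nth_cat size_map; case: ifP => hp.
    have j0 : J by move: hp; case: (enum J) => [|j0 _] //.
    by rewrite (nth_map j0) //; move=> i r c /=; apply: hv.
  case: (p - size (enum J))%N => [|p'] /=; first exact: zbox_valid.
  by rewrite nth_nil; exact: zbox_valid.
- move=> x /hc [j hj]; exists (index j (enum J)).
    by rewrite size_cat size_map ltn_addr // index_mem mem_enum.
  rewrite nth_cat size_map index_mem ?mem_enum //.
  rewrite (nth_map j) ?index_mem ?mem_enum // nth_index ?mem_enum //.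
- rewrite big_cat big_cons big_nil /= hz !addr0 big_map.
  by rewrite big_enum /=.
Qed.

Lemma sum_nth_ge0 (s : seq (X * X)) :
  (forall p, bvalid (nth zbox s p)) -> 0 <= \sum_(b <- s) bvol b.
Proof.
elim: s => [|b s IH] h; first by rewrite big_nil.
rewrite big_cons addr_ge0 //; first by apply: bvol_ge0; exact: (h 0%N).
by apply: IH => p; exact: (h p.+1).
Qed.

Lemma countable_null (A : nat -> set X) :
  (forall m, finnullM (A m)) -> lebesgue_null (fun x => exists m, A m x).
Proof.
move=> hA eps he.
pose em (m : nat) := eps / 2%:R ^+ m.+1.
have em_gt0 m : 0 < em m by rewrite /em divr_gt0 // exprn_gt0.
have hL m := @finnullM_seq (A m) (em m) (em_gt0 m) (hA m).
case: (choice hL) => Lf hLf.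
pose FL m := flatten [seq Lf i | i <- iota 0 m].
have FLS m : FL m.+1 = FL m ++ Lf m.
  by rewrite /FL -addn1 iotaD map_cat flatten_cat /= cats0.
have FL0 : FL 0%N = [::] by [].
have sizeFL m : (m <= size (FL m))%N.
  elim: m => [|m IH] //; rewrite FLS size_cat.
  by case: (hLf m) => h _ _ _; rewrite -addn1 leq_add.
have prefFL a b : (a <= b)%N -> exists s, FL b = FL a ++ s.
  move=> /subnK <-; elim: (b - a)%N => [|c [s IH]]; first by exists [::]; rewrite cats0.
  by exists (s ++ Lf (c + a)%N); rewrite addSn FLS IH catA.
have nthFL n a b : (n < size (FL a))%N -> (a <= b)%N ->
    nth zbox (FL b) n = nth zbox (FL a) n.
  by move=> hn /prefFL [s ->]; rewrite nth_cat hn.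
pose G n := nth zbox (FL n.+1) n.
have Geq n b : (n < b)%N -> G n = nth zbox (FL b) n.
  move=> hb; rewrite /G (nthFL n n.+1 b) //; exact: leq_trans (sizeFL n.+1).
have validFL m p : bvalid (nth zbox (FL m) p).
  elim: m p => [|m IH] p; first by rewrite FL0 nth_nil; exact: zbox_valid.
  rewrite FLS nth_cat; case: ifP => _; first exact: IH.
  by case: (hLf m) => _ h _ _; exact: h.
have sumFL M : \sum_(b <- FL M) bvol b <= eps - eps / 2%:R ^+ M.
  elim: M => [|M IH]; first by rewrite big_nil expr0 divr1 subrr.
  rewrite FLS big_cat /=; case: (hLf M) => _ _ _ hs.
  have -> : eps - eps / 2%:R ^+ M.+1 = (eps - eps / 2%:R ^+ M) + em M.
    rewrite /em exprS; field; by rewrite expf_neq0.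
  by apply: lerD => //; apply: ltW.
exists (fun n => (G n).1), (fun n => (G n).2); split.
- by move=> n i r c; rewrite /G; apply: validFL.
- move=> x [m0 hx]; case: (hLf m0) => _ _ /(_ x hx) [p hp hin] _.
  exists (size (FL m0) + p)%N.
  have -> : G (size (FL m0) + p)%N = nth zbox (FL m0.+1) (size (FL m0) + p)%N.
    rewrite (Geq _ (maxn (size (FL m0) + p).+1 m0.+1)) ?leq_maxl //.
    rewrite (nthFL _ m0.+1) ?leq_maxr //.
    by rewrite FLS size_cat ltn_add2l.
  by rewrite FLS nth_cat ltnNge leq_addr /= addKn.
- move=> M.
  have -> : \sum_(n < M) box_vol (G n).1 (G n).2 = \sum_(n < M) bvol (nth zbox (FL M) n).
    by apply: eq_bigr => n _; rewrite (Geq n M).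
  have hsz : (M <= size (FL M))%N by apply: sizeFL.
  have -> : \sum_(n < M) bvol (nth zbox (FL M) n) = \sum_(b <- take M (FL M)) bvol b.
    rewrite (big_nth zbox) size_takel // big_mkord; apply: eq_bigr => n _.
    by rewrite nth_take.
  apply: (@le_lt_trans _ _ (\sum_(b <- FL M) bvol b)).
    rewrite -{2}(cat_take_drop M (FL M)) big_cat /= lerDl.
    by apply: sum_nth_ge0 => p; rewrite nth_drop.
  apply: (le_lt_trans (sumFL M)); rewrite ltrBlDr ltrDl.
  by rewrite divr_gt0 // exprn_gt0.
Qed.

End CountUnion.

Set Implicit Arguments. Unset Strict Implicit. Unset Printing Implicit Defensive.
Local Open Scope ring_scope.
Local Open Scope classical_set_scope.

Lemma idx_spec (R : realType) (r d : R) (s' : nat) (v : R) : 0 < d ->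
  r + r = s'.+1%:R * d -> `|v| <= r ->
  -r + (minn (Num.Def.truncn ((v + r)/d)) s')%:R * d <= v /\
  v <= -r + (minn (Num.Def.truncn ((v + r)/d)) s')%:R * d + d.
Proof.
move=> hd hrs /ler_normlP [hv1 hv2].
set w := (v + r) / d.
have hw : w * d = v + r by rewrite /w mulfVK // gt_eqF.
have w0 : 0 <= w by rewrite /w divr_ge0 // ?(ltW hd) //; lra.
have /andP [h1 h2] := truncn_itv w0.
set m0 := Num.Def.truncn w in h1 h2 *.
rewrite -/w -/m0.
case: (leqP m0 s') => hm.
  have e1 : m0%:R * d <= w * d by rewrite ler_pM2r.
  have e2 : w * d <= m0.+1%:R * d by rewrite ler_pM2r // ltW.
  rewrite -natr1 mulrDl mul1r in e2; split; lra.
have e0 : s'%:R <= w by apply: le_trans h1; rewrite ler_nat ltnW.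
have e1 : s'%:R * d <= w * d by rewrite ler_pM2r.
rewrite -natr1 mulrDl mul1r in hrs; split; lra.
Qed.

Section Grid.
Variables (R : realType) (I : finType) (E : pred I) (a : nat).

Definition fvol (lo hi : I -> R) : R := \prod_t (hi t - lo t).
Definition finnullF (S : set (I -> R)) : Prop :=
  forall eps : R, 0 < eps -> exists (J : finType) (lo hi : J -> I -> R),
   [/\ forall j t, lo j t <= hi j t,
       forall x, S x -> exists j, forall t, lo j t <= x t <= hi j t &
       \sum_(j : J) fvol (lo j) (hi j) < eps].

Local Notation I' := {t : I | ~~ E t}.

Lemma grid_null (r K : R) (D : (I -> R) -> ('I_a -> R) -> Prop) :
  0 < r -> 0 <= K -> (a < #|E|)%N ->
  (forall x z, D x z -> (forall t, `|x t| <= r) /\ (forall l, `|z l| <= r)) ->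
  (forall x z x' z' (dl : R), 0 <= dl -> D x z -> D x' z' ->
      (forall t, ~~ E t -> `|x t - x' t| <= dl) ->
      (forall l, `|z l - z' l| <= dl) -> forall t, E t -> `|x t - x' t| <= K * dl) ->
  finnullF [set x | exists z, D x z].
Proof.
move=> hr hK hq hD hlip eps he.
pose q := #|E|. pose n' := #|{: I'}|.
pose C := (r + r) ^+ n' * ((K + K) * (r + r)) ^+ q.
have C0 : 0 <= C by rewrite /C mulr_ge0 // exprn_ge0 // ?mulr_ge0 //; lra.
pose s' := Num.Def.truncn (C / eps). pose s := s'.+1.
pose S := (s%:R : R).
have hS : 0 < S by rewrite /S ltr0n.
pose d := (r + r) / S.
have hd : 0 < d by rewrite /d divr_gt0 //; lra.
have hrs : r + r = s%:R * d by rewrite /d -/S mulrC mulfVK // gt_eqF.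
pose J := ({ffun I' -> 'I_s} * {ffun 'I_a -> 'I_s})%type.
pose gi (g : {ffun I' -> 'I_s}) (t : I) : nat :=
  match (insub t : option I') with Some t' => nat_of_ord (g t') | None => 0%N end.
pose inCell (j : J) (x : I -> R) (z : 'I_a -> R) :=
  (forall t, ~~ E t -> -r + (gi j.1 t)%:R * d <= x t <= -r + (gi j.1 t)%:R * d + d) /\
  (forall l, -r + (j.2 l : nat)%:R * d <= z l <= -r + (j.2 l : nat)%:R * d + d).
pose cen (j : J) : option (I -> R) :=
  match pselect (exists p : (I -> R) * ('I_a -> R), D p.1 p.2 /\ inCell j p.1 p.2) with
  | left e => Some (proj1_sig (cid e)).1 | right _ => None end.
pose lo (j : J) t := if cen j is Some c then (if E t then c t - K * d
                      else -r + (gi j.1 t)%:R * d) else 0.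
pose hi (j : J) t := if cen j is Some c then (if E t then c t + K * d
                      else -r + (gi j.1 t)%:R * d + d) else 0.
have Kd0 : 0 <= K * d by rewrite mulr_ge0 // ltW.
exists J, lo, hi; split.
- move=> j t; rewrite /lo /hi; case: (cen j) => [c|] //; case: (E t); lra.
- move=> x [z hxz]; have [bx bz] := hD _ _ hxz.
  pose g : {ffun I' -> 'I_s} :=
    [ffun t' => inord (minn (Num.Def.truncn ((x (val t') + r) / d)) s')].
  pose h : {ffun 'I_a -> 'I_s} :=
    [ffun l => inord (minn (Num.Def.truncn ((z l + r) / d)) s')].
  have hin : inCell (g, h) x z.
    split => [t Et|l] /=.
      rewrite /gi insubT /= ffunE inordK ?ltnS ?geq_minr //.
      by have [] := @idx_spec R r d s' _ hd hrs (bx t) => *; apply/andP.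
    rewrite ffunE inordK ?ltnS ?geq_minr //.
    by have [] := @idx_spec R r d s' _ hd hrs (bz l) => *; apply/andP.
  exists (g, h); rewrite /lo /hi /cen.
  case: pselect => [e|ne]; last by exfalso; apply: ne; exists (x, z).
  case: (cid e) => [[x' z'] [hD' hin']] /= t; move: hin' hin => /= hin' hin.
  case Et: (E t); last first.
    by have /andP [] := hin.1 t (negbT Et) => *; apply/andP.
  have := hlip x z x' z' d (ltW hd) hxz hD' _ _ t Et; rewrite ler_distl; apply.
    move=> t0 Et0; rewrite ler_distl.
    have /andP [h1 h2] := hin.1 t0 Et0; have /andP [h3 h4] := hin'.1 t0 Et0.
    apply/andP; split; lra.
  move=> l; rewrite ler_distl.
  have /andP [h1 h2] := hin.2 l; have /andP [h3 h4] := hin'.2 l.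
  apply/andP; split; lra.
- pose V := (K * d + K * d) ^+ q * d ^+ n'.
  have V0 : 0 <= V by rewrite /V mulr_ge0 // exprn_ge0 //; lra.
  have hv j : fvol (lo j) (hi j) <= V.
    rewrite /fvol /lo /hi; case: (cen j) => [c|].
      rewrite (bigID E) /=.
      have -> : \prod_(t | E t) ((if E t then c t + K * d else -r + (gi j.1 t)%:R * d + d) -
                  (if E t then c t - K * d else -r + (gi j.1 t)%:R * d))
                = \prod_(t | E t) (K * d + K * d).
        by apply: eq_bigr => t ->; ring.
      have -> : \prod_(t | ~~ E t) ((if E t then c t + K * d else -r + (gi j.1 t)%:R * d + d) -
                  (if E t then c t - K * d else -r + (gi j.1 t)%:R * d))
                = \prod_(t | ~~ E t) d.
        by apply: eq_bigr => t /negbTE ->; ring.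
      by rewrite !prodr_const /V /n' card_sig.
    have [t0 Et0] : exists t0, E t0.
      by move/card_gt0P: (leq_ltn_trans (leq0n a) hq) => [t0 ?]; exists t0.
    by rewrite (bigD1 t0) //= subrr mul0r.
  apply: (le_lt_trans (ler_sum _ (fun j _ => hv j))).
  rewrite sumr_const card_prod !card_ffun !card_ord -/n'.
  rewrite -mulr_natr natrM !natrX -/S.
  have e1 : K * d + K * d = ((K + K) * (r + r)) / S.
    by rewrite /d; field; rewrite gt_eqF.
  rewrite /V e1 /d !expr_div_n.
  have SX m : S ^+ m != 0 by rewrite expf_neq0 // gt_eqF.
  have -> : ((K + K) * (r + r)) ^+ q / S ^+ q * ((r + r) ^+ n' / S ^+ n') *
     (S ^+ n' * S ^+ a) = C * (S ^+ a / S ^+ q).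
    by rewrite /C; field; rewrite !SX.
  apply: (@le_lt_trans _ _ (C / S)).
    apply: ler_wpM2l => //.
    have h : S ^+ a.+1 <= S ^+ q by apply: ler_weXn2l => //; rewrite /S ler1n.
    rewrite exprSr in h.
    rewrite ler_pdivrMr ?exprn_gt0 //.
    have hW : S * S^-1 = 1 by rewrite mulfV // gt_eqF.
    have W0 : 0 <= S^-1 by rewrite invr_ge0 ltW.
    have -> : S ^+ a = S^-1 * (S ^+ a * S) by field; rewrite gt_eqF.
    exact: ler_wpM2l.
  rewrite ltr_pdivrMr // mulrC -ltr_pdivrMr //.
  exact: truncnS_gt.
Qed.
End Grid.

Set Implicit Arguments. Unset Strict Implicit. Unset Printing Implicit Defensive.
Local Open Scope ring_scope.
Local Open Scope classical_set_scope.

Section Lip.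
Variable R : realType.

Definition vclose p (u v : 'cV[R]_p) (dl : R) := forall i, `|u i 0 - v i 0| <= dl.
Definition vbnd p (u : 'cV[R]_p) (rho : R) := forall i, `|u i 0| <= rho.
Definition lipf p q (g : 'cV[R]_p -> 'cV[R]_q) :=
  exists L : R, 0 <= L /\ forall u v dl, 0 <= dl -> vclose u v dl -> vclose (g u) (g v) (L * dl).

Lemma relu_lip (x y : R) : `|Num.max x 0 - Num.max y 0| <= `|x - y|.
Proof.
have n1 := ler_norm (x - y).
have n2 : - (x - y) <= `|x - y| by rewrite -normrN ler_norm.
have [hx|hx] := lerP x 0; have [hy|hy] := lerP y 0;
  rewrite ?(max_r hx) ?(max_r hy) ?(max_l (ltW hx)) ?(max_l (ltW hy));
  rewrite ler_norml; apply/andP; split; lra.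
Qed.

Lemma sum_abs_le p (F : 'I_p -> R) (c : R) : (forall i, `|F i| <= c) ->
  `|\sum_i F i| <= p%:R * c.
Proof.
move=> h; apply: (le_trans (ler_norm_sum _ _ _)).
apply: (le_trans (ler_sum _ (fun i _ => h i))).
by rewrite sumr_const card_ord mulr_natl.
Qed.

Lemma prod_close (b b' w w' db dw Mw rho : R) :
  `|b - b'| <= db -> `|w - w'| <= dw -> `|w| <= Mw -> `|b'| <= rho ->
  `|b * w - b' * w'| <= db * Mw + rho * dw.
Proof.
move=> h1 h2 h3 h4.
have -> : b * w - b' * w' = (b - b') * w + b' * (w - w') by ring.
apply: (le_trans (ler_normD _ _)); rewrite !normrM.
apply: lerD; apply: ler_pM => //; exact: normr_ge0.
Qed.

Lemma mulmx_lip p q (W : 'M[R]_(q, p)) : lipf (fun u : 'cV_p => W *m u).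
Proof.
exists (p%:R * \sum_j \sum_i `|W j i|); split.
  by rewrite mulr_ge0 // sumr_ge0 // => j _; rewrite sumr_ge0.
move=> u v dl hdl huv j; rewrite !mxE -sumrB.
have hi : forall i, `|W j i * u i 0 - W j i * v i 0| <= (\sum_j \sum_i `|W j i|) * dl.
  move=> i; rewrite -mulrBr normrM; apply: ler_pM; rewrite ?normr_ge0 ?huv //.
  rewrite (bigD1 j) //= (bigD1 i) //= -addrA lerDl addr_ge0 // sumr_ge0 // => *.
  exact: sumr_ge0.
by rewrite -mulrA; apply: sum_abs_le.
Qed.

Lemma net_lip a b (N : relu_net R a b) : lipf (net_eval N).
Proof.
elim: N => [a' b' W | a' h b' W bias N' [L [L0 IH]]] /=.
  exact: mulmx_lip.
have [L1 [L10 H1]] := mulmx_lip W.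
exists (L * L1); split; first exact: mulr_ge0.
move=> u v dl hdl huv; rewrite -mulrA; apply: IH; first exact: mulr_ge0.
move=> i; rewrite /relu_vec !mxE.
apply: (le_trans (relu_lip _ _)).
have := H1 u v dl hdl huv i; rewrite !mxE.
have -> : \sum_j W i j * u j 0 + bias i 0 - (\sum_j W i j * v j 0 + bias i 0) =
  \sum_j W i j * u j 0 - \sum_j W i j * v j 0 by ring.
done.
Qed.

Lemma lipf_bnd p q (g : 'cV[R]_p -> 'cV[R]_q) : lipf g ->
  exists L c, 0 <= L /\ 0 <= c /\
   (forall u v dl, 0 <= dl -> vclose u v dl -> vclose (g u) (g v) (L * dl)) /\
   (forall u M, 0 <= M -> vbnd u M -> vbnd (g u) (L * M + c)).
Proof.
move=> [L [L0 H]]; exists L, (\sum_j `|g 0 j 0|).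
split; first done; split; first by rewrite sumr_ge0.
split; first done.
move=> u M M0 hu j.
have : vclose u 0 M by move=> i; rewrite mxE subr0.
move/(H _ _ _ M0)/(_ j) => hj.
have e : g u j 0 = (g u j 0 - g 0 j 0) + g 0 j 0 by ring.
rewrite e; apply: (le_trans (ler_normD _ _)); apply: lerD => //.
by rewrite (bigD1 j) //= lerDl sumr_ge0.
Qed.

End Lip.

Unset Implicit Arguments.
Section Comp.
Variables (R : realType) (k : nat) (d : nat -> nat)
  (f : forall i : 'I_k, 'cV[R]_(d (i.*2)) -> 'cV[R]_(d (i.*2).+1)).
Hypothesis hfl : forall i, lipf (f i).
Local Notation BT := (forall i : 'I_k, 'M[R]_(d (i.+1).*2, d (i.*2).+1)).

Definition Bbnd (B : BT) (rho : R) := forall j r c, `|B j r c| <= rho.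
Definition Bclose (B B' : BT) (dl : R) (i : nat) :=
  forall j : 'I_k, (j < i)%N -> forall r c, `|B j r c - B' j r c| <= dl.

Lemma comp_blocksS (B : BT) i (h : (i.+1 <= k)%N) z :
  comp_blocks f B h z = B (Ordinal h) *m f (Ordinal h) (comp_blocks f B (ltnW h) z).
Proof. by []. Qed.

Lemma comp_blocks_irr (B : BT) i (h h' : (i <= k)%N) z :
  comp_blocks f B h z = comp_blocks f B h' z.
Proof. by rewrite (bool_irrelevance h h'). Qed.

Lemma comp_lip i (hi : (i <= k)%N) (rho : R) : 0 <= rho ->
  exists M K : R, [/\ 0 <= M, 0 <= K &
   forall (B B' : BT) x x' dl, 0 <= dl -> Bbnd B rho -> Bbnd B' rho ->
     vbnd x rho -> vbnd x' rho -> Bclose B B' dl i -> vclose x x' dl ->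
     vbnd (comp_blocks f B hi x) M /\
     vclose (comp_blocks f B hi x) (comp_blocks f B' hi x') (K * dl)].
Proof.
move=> rho0; elim: i hi => [|i IH] hi.
  exists rho, 1; split => // B B' x x' dl _ _ _ hx _ _ hxx; split => //=.
  by rewrite mul1r.
have [M [K [M0 K0 H]]] := IH (ltnW hi).
have [L [c [L0 [c0 [HL HB]]]]] := lipf_bnd (hfl (Ordinal hi)).
pose p := d (i.*2).+1.
pose Mw := L * M + c.
have Mw0 : 0 <= Mw by rewrite /Mw addr_ge0 // mulr_ge0.
exists (p%:R * (rho * Mw)), (p%:R * (Mw + rho * (L * K))); split.
- by rewrite mulr_ge0 // mulr_ge0.
- by rewrite mulr_ge0 // addr_ge0 // mulr_ge0 // mulr_ge0.
move=> B B' x x' dl dl0 hB hB' hx hx' hBB hxx.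
have hBB' : Bclose B B' dl i by move=> j hj; apply: hBB; rewrite ltnW.
have [b1 c1] := H B B' x x' dl dl0 hB hB' hx hx' hBB' hxx.
have [b2 _] := H B' B x' x dl dl0 hB' hB hx' hx
  (fun j hj r c => ltac:(rewrite distrC; exact: hBB' j hj r c))
  (fun j => ltac:(rewrite distrC; exact: hxx j)).
set w := comp_blocks f B (ltnW hi) x in b1 c1 *.
set w' := comp_blocks f B' (ltnW hi) x' in b2 c1 *.
have bw := HB w M M0 b1.
have bw' := HB w' M M0 b2.
have cw := HL w w' (K * dl) (mulr_ge0 K0 dl0) c1.
rewrite !comp_blocksS; split.
  move=> r; rewrite mxE; apply: sum_abs_le => j; rewrite normrM.
  by apply: ler_pM; rewrite ?normr_ge0 //.
move=> r; rewrite !mxE -sumrB.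
rewrite -mulrA; apply: sum_abs_le => j.
have -> : (Mw + rho * (L * K)) * dl = dl * Mw + rho * (L * (K * dl)) by ring.
apply: prod_close => //; first by apply: hBB => /=.
Qed.

End Comp.

Set Implicit Arguments. Unset Strict Implicit. Unset Printing Implicit Defensive.
Local Open Scope ring_scope.
Local Open Scope classical_set_scope.

Section Flat.
Variables (R : realType) (k : nat) (rows cols : 'I_k -> nat).
Local Notation X := (mxfam R rows cols).
Definition Ifam (i : 'I_k) := ('I_(rows i) * 'I_(cols i))%type.
Definition Ix := {i : 'I_k & Ifam i}.
Definition flat (B : X) : Ix -> R := fun t => B (tag t) (tagged t).1 (tagged t).2.
Definition unflat (x : Ix -> R) : X :=
  fun i => \matrix_(r, c) x (@Tagged 'I_k i Ifam (r, c)).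

Lemma unflatK B : unflat (flat B) = B.
Proof.
apply: functional_extensionality_dep => i; apply/matrixP => r c.
by rewrite /unflat mxE.
Qed.

Lemma box_vol_flat (lo hi : Ix -> R) :
  box_vol (unflat lo) (unflat hi) = fvol lo hi.
Proof.
rewrite /box_vol /fvol.
transitivity (\prod_(i < k) \prod_(p : Ifam i) (hi (Tagged Ifam p) - lo (Tagged Ifam p))).
  apply: eq_bigr => i _; rewrite pair_bigA; apply: eq_bigr => [[r c]] _ /=.
  by rewrite !mxE.
rewrite (sig_big_dep (fun _ => true) (fun i (_ : Ifam i) => true)
   (fun i (p : Ifam i) => hi (Tagged Ifam p) - lo (Tagged Ifam p))).
by apply: eq_bigr => -[i p] _.
Qed.

Lemma flat_null (A : set X) (S : set (Ix -> R)) :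
  (forall B, A B -> S (flat B)) -> finnullF S -> finnullM A.
Proof.
move=> hAS hS eps he.
have [J [lo [hi [hv hc hs]]]] := hS eps he.
exists J, (fun j => unflat (lo j)), (fun j => unflat (hi j)); split.
- by move=> j i r c; rewrite !mxE.
- move=> B /hAS /hc [j hj]; exists j => i r c; rewrite !mxE.
  exact: (hj (Tagged Ifam (r, c))).
- by under eq_bigr => j _ do rewrite box_vol_flat.
Qed.
End Flat.

Section Alg.
Variable R : realType.

Lemma solve_col p (Xr u : 'I_p -> R) c0 : u c0 != 0 ->
  \sum_c Xr c * u c = 0 ->
  Xr c0 = - ((u c0)^-1 * \sum_(c | c != c0) Xr c * u c).
Proof.
move=> hu; rewrite (bigD1 c0) //= => h.
have -> : \sum_(c | c != c0) Xr c * u c = - (Xr c0 * u c0).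
  by apply/eqP; rewrite -addr_eq0 addrC h.
by field.
Qed.

Lemma inv_bnd {rho v : R} : 0 < rho -> rho^-1 <= `|v| -> `|v^-1| <= rho.
Proof.
move=> hr hv.
have hv0 : 0 < `|v| by apply: lt_le_trans hv; rewrite invr_gt0.
rewrite normrV ?unitfE -?normr_gt0 //.
by rewrite -[rho]invrK lef_pV2 ?posrE ?invr_gt0.
Qed.

Lemma lip_col p (Xr Xr' u u' : 'I_p -> R) c0 (rho Mu Ku dl : R) :
  0 < rho -> 0 <= dl -> 0 <= Mu -> 0 <= Ku ->
  rho^-1 <= `|u c0| -> rho^-1 <= `|u' c0| ->
  (forall c, `|Xr c| <= rho) -> (forall c, `|Xr' c| <= rho) ->
  (forall c, `|u c| <= Mu) -> (forall c, `|u c - u' c| <= Ku * dl) ->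
  (forall c, c != c0 -> `|Xr c - Xr' c| <= dl) ->
  `|(u c0)^-1 * \sum_(c | c != c0) Xr c * u c -
    (u' c0)^-1 * \sum_(c | c != c0) Xr' c * u' c|
  <= (rho * rho * Ku * (p%:R * (rho * Mu)) + rho * (p%:R * (Mu + rho * Ku))) * dl.
Proof.
move=> hr hdl hMu hKu hu hu' hX hX' hub huc hXc.
have hu0 : u c0 != 0.
  by rewrite -normr_gt0; apply: lt_le_trans hu; rewrite invr_gt0.
have hu0' : u' c0 != 0.
  by rewrite -normr_gt0; apply: lt_le_trans hu'; rewrite invr_gt0.
have ha := inv_bnd hr hu.
have ha' := inv_bnd hr hu'.
have hda : `|(u c0)^-1 - (u' c0)^-1| <= rho * rho * Ku * dl.
  have -> : (u c0)^-1 - (u' c0)^-1 = - (u c0 - u' c0) * ((u c0)^-1 * (u' c0)^-1).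
    by field; rewrite hu0 hu0'.
  rewrite normrM normrN normrM.
  have -> : rho * rho * Ku * dl = (Ku * dl) * (rho * rho) by ring.
  apply: ler_pM; rewrite ?normr_ge0 ?mulr_ge0 ?normr_ge0 //.
  by apply: ler_pM; rewrite ?normr_ge0.
rewrite !(big_mkcond (fun c => c != c0)) /=.
have hS : `|\sum_c (if c != c0 then Xr c * u c else 0)| <= p%:R * (rho * Mu).
  apply: sum_abs_le => c; case: ifP => _; last by rewrite normr0 mulr_ge0 // ltW.
  by rewrite normrM; apply: ler_pM; rewrite ?normr_ge0.
have hdS : `|\sum_c (if c != c0 then Xr c * u c else 0) -
             \sum_c (if c != c0 then Xr' c * u' c else 0)| <=
           p%:R * (Mu + rho * Ku) * dl.
  rewrite -sumrB -mulrA; apply: sum_abs_le => c; case: ifP => hc.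
    have -> : (Mu + rho * Ku) * dl = dl * Mu + rho * (Ku * dl) by ring.
    by apply: prod_close; [exact: hXc | exact: huc | exact: hub | exact: hX'].
  by rewrite subr0 normr0 mulr_ge0 // addr_ge0 // mulr_ge0 // ltW.
have := prod_close hda hdS hS ha'.
move/le_trans; apply; rewrite le_eqVlt; apply/orP; left; apply/eqP; ring.
Qed.
End Alg.

Unset Implicit Arguments.
Section Main.
Variables (R : realType) (k : nat) (d : nat -> nat)
  (f : forall i : 'I_k, 'cV[R]_(d (i.*2)) -> 'cV[R]_(d (i.*2).+1)).
Hypothesis hfl : forall i, lipf (f i).
Definition rowsF := fun i : 'I_k => d (i.+1).*2.
Definition colsF := fun i : 'I_k => d (i.*2).+1.
Local Notation X := (mxfam R rowsF colsF).
Local Notation n := (d 0%N).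
Local Notation Ixx := (Ix rowsF colsF).

Definition colL (z : 'I_(n + n) -> R) : 'cV[R]_n := \col_i z (lshift n i).
Definition colR (z : 'I_(n + n) -> R) : 'cV[R]_n := \col_i z (rshift n i).
Definition uvec (i0 : 'I_k) (B : X) (z : 'I_(n + n) -> R) : 'cV[R]_(d (i0.*2).+1) :=
  f i0 (comp_blocks f B (ltnW (ltn_ord i0)) (colL z)) -
  f i0 (comp_blocks f B (ltnW (ltn_ord i0)) (colR z)).

Definition Dset (i0 : 'I_k) (c0 : 'I_(d (i0.*2).+1)) (rho : R) (x : Ixx -> R)
   (z : 'I_(n + n) -> R) : Prop :=
  [/\ forall t, `|x t| <= rho, forall l, `|z l| <= rho,
      rho^-1 <= `|uvec i0 (unflat x) z c0 0| &
      (unflat x i0) *m uvec i0 (unflat x) z = 0].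

Definition Epred (i0 : 'I_k) (c0 : 'I_(d (i0.*2).+1)) : pred Ixx :=
  fun t => (tag t == i0) && ((tagged t).2 == c0 :> nat).

Lemma D_null (i0 : 'I_k) c0 rho : 0 < rho -> (n + n < #|Epred i0 c0|)%N ->
  finnullF [set x | exists z, Dset i0 c0 rho x z].
Proof.
move=> hr hq.
have [M [Kc [M0 Kc0 HC]]] := @comp_lip R k d f hfl _ (ltnW (ltn_ord i0)) rho (ltW hr).
have [L [cf [L0 [cc0 [HL HB]]]]] := lipf_bnd (hfl i0).
pose Mw := L * M + cf.
pose Mu := Mw + Mw.
pose Ku := L * Kc + L * Kc.
pose p := d (i0.*2).+1.
have Mw0 : 0 <= Mw by rewrite /Mw addr_ge0 // mulr_ge0.
have Mu0 : 0 <= Mu by rewrite /Mu addr_ge0.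
have Ku0 : 0 <= Ku by rewrite /Ku addr_ge0 // mulr_ge0.
apply: (@grid_null R Ixx (Epred i0 c0) (n + n) rho
  (rho * rho * Ku * (p%:R * (rho * Mu)) + rho * (p%:R * (Mu + rho * Ku)))).
- exact: hr.
- by repeat (apply: addr_ge0 || apply: mulr_ge0); rewrite ?ler0n ?(ltW hr).
- exact: hq.
- by move=> x z [].
move=> x z x' z' dl hdl [bx bz hu hE] [bx' bz' hu' hE'] hxc hzc [i [rw cc]] /=.
move=> /andP [/eqP /= hi /= hc]; subst i.
have hc' : cc = c0 by apply: val_inj; apply/eqP.
subst cc.
have hBb : forall y, (forall t, `|y t| <= rho) -> Bbnd R k d (unflat y) rho.
  by move=> y hy j r c; rewrite mxE.
have hBc : Bclose R k d (unflat x) (unflat x') dl i0.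
  move=> j hj r c; rewrite !mxE; apply: hxc; rewrite /Epred /=.
  apply/negP => /andP [/eqP hji _]; move: hj; by rewrite hji ltnn.
have [bL cL] := HC (unflat x) (unflat x') (colL z) (colL z') dl hdl (hBb _ bx) (hBb _ bx')
  (fun l => ltac:(rewrite mxE; exact: bz)) (fun l => ltac:(rewrite mxE; exact: bz'))
  hBc (fun l => ltac:(rewrite !mxE; exact: hzc)).
have [bR cR] := HC (unflat x) (unflat x') (colR z) (colR z') dl hdl (hBb _ bx) (hBb _ bx')
  (fun l => ltac:(rewrite mxE; exact: bz)) (fun l => ltac:(rewrite mxE; exact: bz'))
  hBc (fun l => ltac:(rewrite !mxE; exact: hzc)).
set U := uvec i0 (unflat x) z in hu hE *.
set U' := uvec i0 (unflat x') z' in hu' hE' *.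
have hUb : forall c, `|U c 0| <= Mu.
  move=> c; rewrite /U /uvec !mxE; apply: (le_trans (ler_normB _ _)).
  by apply: lerD; [exact: HB _ _ M0 bL c | exact: HB _ _ M0 bR c].
have hUc : forall c, `|U c 0 - U' c 0| <= Ku * dl.
  move=> c; rewrite /U /U' /uvec !mxE.
  set a1 := f i0 _ c 0; set a2 := f i0 _ c 0; set a3 := f i0 _ c 0; set a4 := f i0 _ c 0.
  have -> : a1 - a2 - (a3 - a4) = (a1 - a3) - (a2 - a4) by ring.
  apply: (le_trans (ler_normB _ _)).
  have -> : Ku * dl = L * (Kc * dl) + L * (Kc * dl) by rewrite /Ku; ring.
  apply: lerD; [exact: HL _ _ _ (mulr_ge0 Kc0 hdl) cL c |
                exact: HL _ _ _ (mulr_ge0 Kc0 hdl) cR c].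
have hU0 : U c0 0 != 0.
  by rewrite -normr_gt0; apply: lt_le_trans hu; rewrite invr_gt0.
have hU0' : U' c0 0 != 0.
  by rewrite -normr_gt0; apply: lt_le_trans hu'; rewrite invr_gt0.
have ex := @solve_col R p (fun c => unflat x i0 rw c) (fun c => U c 0) c0 hU0
  (ltac:(by have := congr1 (fun M : 'M[R]_(rowsF i0, 1) => M rw 0) hE; rewrite !mxE)).
have ex' := @solve_col R p (fun c => unflat x' i0 rw c) (fun c => U' c 0) c0 hU0'
  (ltac:(by have := congr1 (fun M : 'M[R]_(rowsF i0, 1) => M rw 0) hE'; rewrite !mxE)).
rewrite /= in ex ex'.
rewrite [X in `|X - _|](_ : _ = unflat x i0 rw c0); last by rewrite /unflat mxE.
rewrite [X in `|_ - X|](_ : _ = unflat x' i0 rw c0); last by rewrite /unflat mxE.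
rewrite ex ex'.
have -> : forall A B : R, - A - - B = - (A - B) by move=> *; ring.
rewrite normrN.
apply: (@lip_col R p (fun c => unflat x i0 rw c) (fun c => unflat x' i0 rw c)
   (fun c => U c 0) (fun c => U' c 0) c0 rho Mu Ku dl) => //.
- by move=> cc; rewrite mxE.
- by move=> cc; rewrite mxE.
- move=> cc hcc; rewrite !mxE; apply: hxc; rewrite /Epred /= eqxx /=.
  by rewrite (inj_eq val_inj) hcc.
Qed.

Lemma card_E (i0 : 'I_k) c0 : (rowsF i0 <= #|Epred i0 c0|)%N.
Proof.
pose g := fun r : 'I_(rowsF i0) => (Tagged (Ifam rowsF colsF) ((r, c0) : Ifam rowsF colsF i0) : Ixx).
have ginj : injective g.
  move=> r r' /(congr1 (fun t : Ixx => nat_of_ord (tagged t).1)) /= h.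
  exact: val_inj.
rewrite -{1}(card_ord (rowsF i0)) -(card_imset _ ginj).
apply: (@subset_leq_card _ _ [pred t | Epred i0 c0 t]).
apply/fintype.subsetP => t /imsetP [r _ ->].
by rewrite inE /Epred /= !eqxx.
Qed.

Lemma first_coll (B : X) (x y : 'cV[R]_n) i (h : (i <= k)%N) :
  comp_blocks f B h x = comp_blocks f B h y -> x = y \/
  exists i0 : 'I_k, comp_blocks f B (ltnW (ltn_ord i0)) x <> comp_blocks f B (ltnW (ltn_ord i0)) y
    /\ B i0 *m f i0 (comp_blocks f B (ltnW (ltn_ord i0)) x) =
       B i0 *m f i0 (comp_blocks f B (ltnW (ltn_ord i0)) y).
Proof.
elim: i h => [|i IH] h; first by left.
rewrite !comp_blocksS => e.
case: (pselect (comp_blocks f B (ltnW h) x = comp_blocks f B (ltnW h) y)) => hc.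
  exact: IH (ltnW h) hc.
right; exists (Ordinal h).
by rewrite !(comp_blocks_irr R k d f B _ (ltnW (ltn_ord (Ordinal h))) (ltnW h)).
Qed.

Lemma le_sum_term (I : finType) (F : I -> R) j : (forall i, 0 <= F i) ->
  F j <= \sum_i F i.
Proof. by move=> h; rewrite (bigD1 j) //= lerDl sumr_ge0. Qed.

Lemma bad_D (B : X) : (forall i, injective (f i)) -> ~ injective (Fk f B) ->
  exists (i0 : 'I_k) (c0 : 'I_(colsF i0)) (r : nat) z,
    Dset i0 c0 (r.+1%:R) (flat B) z.
Proof.
move=> hinj hni.
have [x [y [hxy e]]] : exists x y, x <> y /\ Fk f B x = Fk f B y.
  case: (pselect (exists x y, x <> y /\ Fk f B x = Fk f B y)) => // hne.
  exfalso; apply: hni => x y e; case: (pselect (x = y)) => // hxy.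
  by exfalso; apply: hne; exists x, y.
case: (first_coll B x y k (leqnn k) e) => [//|[i0 [hw hB]]].
set w1 := comp_blocks f B _ x in hw hB.
set w2 := comp_blocks f B _ y in hw hB.
pose u := f i0 w1 - f i0 w2.
have hu : u <> 0.
  move=> /eqP; rewrite subr_eq0 => /eqP /hinj; exact: hw.
have [c0 hc0] : exists c0, u c0 0 != 0.
  case: (pselect (exists c0, u c0 0 != 0)) => // hne; exfalso; apply: hu.
  apply/matrixP => c j; rewrite (ord1 j) [RHS]mxE; case: (pselect (u c 0 = 0)) => // h.
  by exfalso; apply: hne; exists c; apply/eqP.
pose z := fun l : 'I_(n + n) => match fintype.split l with inl i => x i 0 | inr i => y i 0 end.
have hzL : colL z = x.
  apply/matrixP => i j; rewrite (ord1 j) mxE /z.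
  by rewrite (@unsplitK n n (inl i)).
have hzR : colR z = y.
  apply/matrixP => i j; rewrite (ord1 j) mxE /z.
  by rewrite (@unsplitK n n (inr i)).
have hU : uvec i0 (unflat (flat B)) z = u by rewrite unflatK /uvec hzL hzR.
pose T := \sum_t `|flat B t| + \sum_l `|z l| + `|u c0 0|^-1.
exists i0, c0, (Num.Def.truncn T), z.
have hT := truncnS_gt T.
set rho := (Num.Def.truncn T).+1%:R in hT *.
have a0 : 0 <= \sum_t `|flat B t| by rewrite sumr_ge0.
have b0 : 0 <= \sum_l `|z l| by rewrite sumr_ge0.
have c0' : 0 <= `|u c0 0|^-1 by rewrite invr_ge0.
have s1 : \sum_t `|flat B t| <= T by rewrite /T; lra.
have s2 : \sum_l `|z l| <= T by rewrite /T; lra.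
have s3 : `|u c0 0|^-1 <= T by rewrite /T; lra.
split.
- move=> t; apply: ltW; apply: le_lt_trans hT; apply: le_trans s1.
  exact: (le_sum_term _ (fun t => `|flat B t|) t (fun _ => normr_ge0 _)).
- move=> l; apply: ltW; apply: le_lt_trans hT; apply: le_trans s2.
  exact: (le_sum_term _ (fun l => `|z l|) l (fun _ => normr_ge0 _)).
- rewrite hU -[`|u c0 0|]invrK lef_pV2 ?posrE ?invr_gt0 ?normr_gt0 //.
    exact: ltW (le_lt_trans s3 hT).
- by rewrite hU unflatK /u mulmxBr hB subrr.
Qed.

End Main.

Local Open Scope ring_scope.
Local Open Scope classical_set_scope.

Lemma lebesgue_null_sub (R : realType) k (rows cols : 'I_k -> nat)
  (A B : set (mxfam R rows cols)) : A `<=` B -> lebesgue_null B -> lebesgue_null A.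
Proof.
move=> hAB hB eps he; have [lo [hi [h1 h2 h3]]] := hB eps he.
by exists lo, hi; split => // x /hAB /h2.
Qed.

Local Notation QT k d := {i0 : 'I_k & 'I_(colsF k d i0)}.

Theorem corollary2 (R : realType) (n m k : nat) (d : nat -> nat)
    (hdpos : forall j, (j <= k.*2)%N -> (0 < d j)%N)
    (hd0 : d 0%N = n) (hdk : d (k.*2) = m) (hm : (n.*2.+1 <= m)%N)
    (hdeven : forall j, ~~ odd j -> (2 <= j)%N -> (j <= k.*2)%N -> (n.*2.+1 <= d j)%N)
    (f : forall i : 'I_k, 'cV[R]_(d (i.*2)) -> 'cV[R]_(d (i.*2).+1))
    (hfnet : forall i, is_relu_net (f i))
    (hfinj : forall i, injective (f i))
    (dO : measure_display) (Omega : measurableType dO) (P : probability Omega R)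
    (B : Omega -> forall i : 'I_k, 'M[R]_(d (i.+1).*2, d (i.*2).+1))
    (hB_ac : forall A : set (mxfam R (fun i : 'I_k => d (i.+1).*2)
                                      (fun i : 'I_k => d (i.*2).+1)),
        lebesgue_null A -> P.-negligible (B @^-1` A)) :
  {ae P, forall w, injective (Fk f (B w))}.
Proof.
subst n.
have hfl : forall i, lipf (f i).
  move=> i; case: (hfnet i) => N hN; have [L [L0 H]] := net_lip N.
  by exists L; split => // u v dl hdl huv; rewrite !hN; apply: H.
pose Bad : set (mxfam R (rowsF k d) (colsF k d)) :=
  [set Bv | ~ injective (Fk f Bv)].
have hsub : ~` [set w | injective (Fk f (B w))] `<=` B @^-1` Bad by [].
case: (posnP k) => hk.
  apply: (negligibleS _ (negligible_set0 P)) => w /= hw.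
  have [i0 _] := bad_D R k d f (B w) hfinj hw.
  by case: i0 => i; rewrite hk.
apply: (negligibleS hsub); apply: hB_ac.
pose i00 : 'I_k := Ordinal hk.
have hc0 : (0 < colsF k d i00)%N by apply: hdpos; rewrite /= double0; apply: leq_trans (hk) _; rewrite -addnn leq_addr.
have hr0 : (0 < rowsF k d i00)%N by apply: hdpos; rewrite /= leq_double.
pose q0 : QT k d := Tagged (fun i0 => 'I_(colsF k d i0)) (Ordinal hc0).
pose NQ := size (enum {: QT k d}).
pose Am (mm : nat) : set (mxfam R (rowsF k d) (colsF k d)) :=
  let q := nth q0 (enum {: QT k d}) (mm %% NQ) in
  [set Bv | exists z, Dset R k d f (tag q) (tagged q) ((mm %/ NQ).+1%:R) (flat Bv) z].
have hz : bvol (zbox R (rowsF k d) (colsF k d)) = 0.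
  rewrite /bvol /box_vol (bigD1 i00) //= (bigD1 (Ordinal hr0)) //=.
  by rewrite (bigD1 (Ordinal hc0)) //= subrr !mul0r.
apply: (@lebesgue_null_sub R k (rowsF k d) (colsF k d) Bad _ _ (countable_null hz (A := Am) _)).
  move=> Bv /(bad_D R k d f Bv hfinj) [i0 [c0 [r [z hD]]]].
  have hq : Tagged (fun i0 => 'I_(colsF k d i0)) c0 \in enum {: QT k d} by rewrite mem_enum.
  have NQ0 : (0 < NQ)%N by rewrite /NQ; move: hq; case: (enum {: QT k d}).
  exists (r * NQ + index (Tagged (fun i0 => 'I_(colsF k d i0)) c0) (enum {: QT k d}))%N.
  rewrite /Am /= divnMDl // modnMDl divn_small ?index_mem // modn_small ?index_mem //.
  by rewrite addn0 nth_index //; exists z.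
move=> mm; pose q := nth q0 (enum {: QT k d}) (mm %% NQ).
apply: (flat_null (S := [set x | exists z, Dset R k d f (tag q) (tagged q)
   ((mm %/ NQ).+1%:R) x z])); first by move=> Bv.
apply: D_null; [exact: hfl | by rewrite ltr0n | ].
apply: leq_trans (card_E _ _ _ _); rewrite /rowsF addnn; apply: hdeven.
- by rewrite odd_double.
- by rewrite doubleS.
- by rewrite leq_double.
Qed.
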